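(* For every task $T=(\mathcal{I},\mathcal{O},\Delta)$ there is a sequential object $S$ with two operations, $\mathsf{set}(\mathrm{id}_i,x_i)$ (returning nothing) and $\mathsf{get}(\mathrm{id}_i)$ (returning a value $y_i$), and a bijection $\alpha$ between $VE(T)$ and $SSpec(S)$ such that, for every $E\in VE(T)$: (1) each invocation or response of process $\mathrm{id}_i$ in $E$ is mapped to an operation of process $\mathrm{id}_i$ in $\alpha(E)$; and (2) each invocation in $E$ with input $x$ is mapped to a completed $\mathsf{set}$ operation with input $x$, and each response in $E$ with output $y$ is mapped to a completed $\mathsf{get}$ operation with output $y$.
   Context: Simplexes and tasks. Processes have distinct identities $\mathrm{id}_1,\dots,\mathrm{id}_n$. A simplex is a finite set of pairs $\{(\mathrm{id}_1,x_1),\dots,(\mathrm{id}_k,x_k)\}$ with distinct identities (vertices); $\mathrm{ID}(\sigma)$ is the set of identities in $\sigma$ and $\dim(\sigma)=|\sigma|-1$. A complex is a set of simplexes closed under nonempty subsets (faces); it is pure of dimension $d$ if each simplex is a face of a $d$-dimensional one. A task for $n$ processes is a triple $T=(\mathcal{I},\mathcal{O},\Delta)$ where $\mathcal{I},\mathcal{O}$ are pure $(n-1)$-dimensional complexes of such (chromatic) simplexes and $\Delta$ maps each $\sigma\in\mathcal{I}$ to a subcomplex $\Delta(\sigma)$ of $\mathcal{O}$ such that: $\Delta(\sigma)$ is pure of dimension $\dim(\sigma)$; every $\tau\in\Delta(\sigma)$ with $\dim\tau=\dim\sigma$ has $\mathrm{ID}(\tau)=\mathrm{ID}(\sigma)$;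 and $\sigma'\subset\sigma$ implies $\Delta(\sigma')\subset\Delta(\sigma)$. The task has a single one-shot operation: process $\mathrm{id}_i$ may invoke it with input $x_i$ (event $inv(\mathrm{id}_i,x_i)$) if $(\mathrm{id}_i,x_i)$ is a vertex of $\mathcal{I}$, and may receive response $y_i$ (event $resp(\mathrm{id}_i):y_i$) if $(\mathrm{id}_i,y_i)$ is a vertex of $\mathcal{O}$. Executions and $VE(T)$. An execution is a sequence of invocation and response events, well-formed (a response of a process follows its pending invocation), in which each process invokes the task at most once. $\sigma_E$ is the set of $(\mathrm{id}_i,x_i)$ such that $E$ contains $inv(\mathrm{id}_i,x_i)$, and $\tau_E$ the set of $(\mathrm{id}_i,y_i)$ such that $E$ contains $resp(\mathrm{id}_i):y_i$. $E$ satisfies $T$ if for every prefix $E'$ of $E$, $\tau_{E'}\in\Delta(\sigma_{E'})$. $VE(T)$ is the set of all executions consisting only of invocations and responses that satisfy $T$. Sequential objects. A sequential object is a (possibly nondeterministic) Mealy machine $(Q,Inv,Res,\delta)$ with a single initial state, $\delta(q,in)$ a set of pairs $(q',r)$ with the next state determined by the response $r$. A sequential execution is an alternating sequence $in_0,r_0,in_1,r_1,\dots$ of invocations and responses generated by $\delta$ from the initial state. Here $SSpec(S)$ denotes the set of all sequential executions of $S$ in which each process invokes at most two operations, first $\mathsf{set}$ and then $\mathsf{get}$, in that order. *)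

(* Defs.v *)
From mathcomp Require Import all_boot.
Set Implicit Arguments. Unset Strict Implicit. Unset Printing Implicit Defensive.

Section Defs.
Variable n : nat.

(** Chromatic simplexes over value type V: a partial map from process
    identities 'I_n to values; vertex (i,v) is present iff s i = Some v.
    This encodes "a finite set of (id,value) pairs with distinct ids". *)
Definition simplex (V : Type) := {ffun 'I_n -> option V}.

Definition sID V (s : simplex V) : {set 'I_n} := [set i | isSome (s i)].
Definition nonempty V (s : simplex V) : Prop := sID s != set0.
Definition is_face V (s' s : simplex V) : Prop :=
  forall i v, s' i = Some v -> s i = Some v.

Definition is_complex V (K : simplex V -> Prop) : Prop :=
  (forall s, K s -> nonempty s) /\
  (forall s s', K s -> nonempty s' -> is_face s' s -> K s').

(* pure of dimension k-1, i.e. every simplex is a face of one with k vertices *)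
Definition pure_card V (K : simplex V -> Prop) (k : nat) : Prop :=
  forall s, K s -> exists t, K t /\ is_face s t /\ #|sID t| = k.

Record task (In Out : Type) := Task {
  tI : simplex In -> Prop;
  tO : simplex Out -> Prop;
  tD : simplex In -> simplex Out -> Prop
}.

Definition is_task In Out (T : task In Out) : Prop :=
  is_complex (tI T) /\ pure_card (tI T) n /\
  is_complex (tO T) /\ pure_card (tO T) n /\
  forall s, tI T s ->
    ((forall t, tD T s t -> tO T t) /\ is_complex (tD T s)) /\
    pure_card (tD T s) #|sID s| /\
    (forall t, tD T s t -> #|sID t| = #|sID s| -> sID t = sID s) /\
    (forall s', tI T s' -> is_face s' s -> forall t, tD T s' t -> tD T s t).

Inductive event (In Out : Type) :=
  | EInv of 'I_n & In
  | EResp of 'I_n & Out.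
Arguments EInv {In Out}.
Arguments EResp {In Out}.

Fixpoint inputs_of In Out (E : seq (event In Out)) (i : 'I_n) : option In :=
  match E with
  | [::] => None
  | EInv j x :: E' => if j == i then Some x else inputs_of E' i
  | _ :: E' => inputs_of E' i
  end.

Fixpoint outputs_of In Out (E : seq (event In Out)) (i : 'I_n) : option Out :=
  match E with
  | [::] => None
  | EResp j y :: E' => if j == i then Some y else outputs_of E' i
  | _ :: E' => outputs_of E' i
  end.

Definition sigma_E In Out (E : seq (event In Out)) : simplex In :=
  [ffun i => inputs_of E i].
Definition tau_E In Out (E : seq (event In Out)) : simplex Out :=
  [ffun i => outputs_of E i].

Definition well_formed In Out (E : seq (event In Out)) : Prop :=
  (forall k1 k2 i x1 x2, onth E k1 = Some (EInv i x1) ->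
       onth E k2 = Some (EInv i x2) -> k1 = k2) /\
  (forall k i y, onth E k = Some (EResp i y) ->
     (exists k' x, k' < k /\ onth E k' = Some (EInv i x)) /\
     (forall k' y', k' < k -> onth E k' <> Some (EResp i y'))).

Definition satisfies In Out (T : task In Out) (E : seq (event In Out)) : Prop :=
  forall m,
    (nonempty (sigma_E (take m E)) -> tI T (sigma_E (take m E))) /\
    (nonempty (tau_E (take m E)) ->
       tD T (sigma_E (take m E)) (tau_E (take m E))).

Definition VE In Out (T : task In Out) (E : seq (event In Out)) : Prop :=
  well_formed E /\ satisfies T E.

Record seq_object (Inv Res : Type) := SeqObject {
  st : Type;
  q0 : st;
  delta : st -> Inv -> st -> Res -> Prop;
  delta_det : forall q a q1 q2 r, delta q a q1 r -> delta q a q2 r -> q1 = q2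
}.

Fixpoint runs Inv Res (S : seq_object Inv Res) (q : st S) (s : seq (Inv * Res))
  : Prop :=
  match s with
  | [::] => True
  | (a, r) :: s' => exists q', delta q a q' r /\ runs q' s'
  end.

Definition seq_exec Inv Res (S : seq_object Inv Res) (s : seq (Inv * Res)) :=
  runs (q0 S) s.

Inductive sinv (In : Type) := SSet of 'I_n & In | SGet of 'I_n.
Inductive sres (Out : Type) := RAck | RVal of Out.
Arguments SSet {In}.
Arguments SGet {In}.
Arguments RAck {Out}.
Arguments RVal {Out}.

Definition set_get_typed In Out (S : seq_object (sinv In) (sres Out)) : Prop :=
  (forall (q : st S) i x q' r, delta q (SSet i x) q' r -> r = RAck) /\
  (forall (q : st S) i q' r, delta q (SGet i) q' r -> exists y, r = RVal y).

Definition SSpec In Out (S : seq_object (sinv In) (sres Out))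
  (s : seq (sinv In * sres Out)) : Prop :=
  seq_exec S s /\
  (forall k1 k2 i x1 x2 r1 r2, onth s k1 = Some (SSet i x1, r1) ->
       onth s k2 = Some (SSet i x2, r2) -> k1 = k2) /\
  (forall k1 k2 i r1 r2, onth s k1 = Some (SGet i, r1) ->
       onth s k2 = Some (SGet i, r2) -> k1 = k2) /\
  (forall k i r, onth s k = Some (SGet i, r) ->
       exists k' x r', k' < k /\ onth s k' = Some (SSet i x, r')).

Definition event_maps_to In Out (ev : event In Out)
  (op : option (sinv In * sres Out)) : Prop :=
  match ev, op with
  | EInv i x, Some (SSet j x', _) => j = i /\ x' = x
  | EResp i y, Some (SGet j, RVal y') => j = i /\ y' = y
  | _, _ => False
  end.

End Defs.

(* Main.v *)
Require Import Defs.
From mathcomp Require Import all_boot.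
Set Implicit Arguments. Unset Strict Implicit. Unset Printing Implicit Defensive.

Section Pf.
Variables (n : nat) (In Out : Type) (T : task n In Out).

Definition evop (ev : event n In Out) : sinv n In * sres Out :=
  match ev with EInv i x => (SSet i x, RAck Out) | EResp i y => (SGet In i, RVal y) end.

Definition conv (p : sinv n In * sres Out) : option (event n In Out) :=
  match p with
  | (SSet i x, RAck) => Some (EInv Out i x)
  | (SGet i, RVal y) => Some (EResp In i y)
  | _ => None
  end.

Lemma conv_evop ev : conv (evop ev) = Some ev. Proof. by case: ev. Qed.
Lemma conv_inv p ev : conv p = Some ev -> p = evop ev.
Proof. by case: p => [[i x|i] [|y]] //= [<-]. Qed.
Lemma evop_inj : injective evop.
Proof. by move=> a b h; have := conv_evop a; rewrite h conv_evop => -[]. Qed.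

Lemma onth_take2 (E : seq (event n In Out)) m k :
  k < size (take m E) -> onth (take m E) k = onth E k.
Proof. by move=> h; rewrite -{2}(cat_take_drop m E) onth_cat h. Qed.

Lemma onth_take (E : seq (event n In Out)) m k x :
  onth (take m E) k = Some x -> onth E k = Some x.
Proof.
move=> h; rewrite -(@onth_take2 E m) //.
by have := onthTE (take m E) k; rewrite h.
Qed.

Lemma VE_take E m : VE T E -> VE T (take m E).
Proof.
move=> [[w1 w2] sat]; split; last first.
  by move=> k; rewrite -take_min; apply: sat.
split.
  by move=> k1 k2 i x1 x2 /onth_take h1 /onth_take h2; apply: w1 h1 h2.
move=> k i y h.
have hk : k < size (take m E) by have := onthTE (take m E) k; rewrite h.
have [[k' [x [lt e]]] nr] := w2 _ _ _ (onth_take h).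
split.
  exists k', x; split => //; rewrite onth_take2 //; exact: ltn_trans hk.
move=> k'' y' lt'; rewrite onth_take2; first exact: nr.
exact: ltn_trans hk.
Qed.

Definition Sobj : seq_object (sinv n In) (sres Out).
refine (@SeqObject _ _ (seq (event n In Out)) [::]
  (fun q a q' r => exists ev, conv (a, r) = Some ev /\ q' = rcons q ev /\ VE T q') _).
by move=> q a q1 q2 r [e1 [h1 [-> _]]] [e2 [h2 [-> _]]]; move: h1; rewrite h2 => -[->].
Defined.

Lemma runsA q s : @runs _ _ Sobj q s ->
  exists E, s = map evop E /\ (s <> [::] -> VE T (q ++ E)).
Proof.
elim: s q => [|[a r] s IH] q /=; first by exists [::].
move=> [q' [[ev [hc [-> hv]]] hr]].
have [E' [-> hE']] := IH _ hr.
exists (ev :: E'); split; first by rewrite /= -(@conv_inv (a, r) ev hc).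
move=> _; case: E' hE' => [|e E'] hE'; first by rewrite cats1.
by rewrite -cat_rcons; apply: hE'.
Qed.

Lemma runsB q E : VE T (q ++ E) -> @runs _ _ Sobj q (map evop E).
Proof.
elim: E q => [|ev E IH] q //= h.
have key : exists q' : seq (event n In Out),
  (exists ev', conv ((evop ev).1, (evop ev).2) = Some ev' /\ q' = rcons q ev' /\ VE T q')
  /\ @runs _ _ Sobj q' (map evop E).
  exists (rcons q ev); split.
    exists ev; split; first by case: ev {h}.
    split => //.
    by move: h; rewrite -cat_rcons => h; have := VE_take (size (rcons q ev)) h; rewrite take_size_cat.
  by apply: IH; rewrite cat_rcons.
by move: key; case: ev {h}.
Qed.

Lemma VE_nil : VE T [::].
Proof.
split.
  by split => [k1 k2 i x1 x2|k i y]; rewrite onth0n.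
move=> m; rewrite /=; split => H; exfalso; move: H; rewrite /nonempty; apply/negP;
  rewrite negbK; apply/eqP/setP => i; rewrite !inE ffunE.
  by [].
by [].
Qed.

Lemma SSpec_map E : VE T E -> SSpec Sobj (map evop E).
Proof.
move=> hv; have [[w1 w2] _] := hv.
split; first by apply: runsB.
split.
  move=> k1 k2 i x1 x2 r1 r2; rewrite !onth_map.
  case e1: (onth E k1) => [[j x|j y]|] //= -[? ? _]; subst.
  case e2: (onth E k2) => [[j' x'|j' y']|] //= -[? ? _]; subst.
  exact: w1 e1 e2.
split.
  move=> k1 k2 i r1 r2; rewrite !onth_map.
  case e1: (onth E k1) => [[j x|j y]|] //= -[? _]; subst.
  case e2: (onth E k2) => [[j' x'|j' y']|] //= -[? _]; subst.
  have [_ n1] := w2 _ _ _ e1; have [_ n2] := w2 _ _ _ e2.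
  case: (ltngtP k1 k2) => // lt.
    by exfalso; apply: (n2 _ _ lt e1).
  by exfalso; apply: (n1 _ _ lt e2).
move=> k i r; rewrite onth_map.
case e1: (onth E k) => [[j x|j y]|] //= -[? _]; subst.
have [[k' [x [lt e]]] _] := w2 _ _ _ e1.
by exists k', x, (RAck Out); split => //; rewrite onth_map e.
Qed.

End Pf.

Theorem theorem1 (n : nat) (In Out : Type) (T : task n In Out) :
  is_task T ->
  exists S : seq_object (sinv n In) (sres Out),
    set_get_typed S /\
    exists alpha : seq (event n In Out) -> seq (sinv n In * sres Out),
      (forall E, VE T E -> SSpec S (alpha E)) /\
      (forall E1 E2, VE T E1 -> VE T E2 -> alpha E1 = alpha E2 -> E1 = E2) /\
      (forall s, SSpec S s -> exists E, VE T E /\ alpha E = s) /\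
      (forall E, VE T E ->
         exists f : nat -> nat, forall k ev, onth E k = Some ev ->
           event_maps_to ev (onth (alpha E) (f k))).
Proof.
move=> _; exists (Sobj T); split.
  split.
    by move=> q i x q' [|y] [ev [hc _]].
  by move=> q i q' [|y] [ev [hc _]] //; exists y.
exists (map (@evop n In Out)); split; first exact: SSpec_map.
split; first by move=> E1 E2 _ _; apply: inj_map; apply: evop_inj.
split.
  move=> s [hr _]; have [E [-> hE]] := runsA hr.
  exists E; split => //; case: E hE => [|e E] hE; first exact: VE_nil.
  by apply: hE.
move=> E _; exists id => k ev; rewrite onth_map => ->; by case: ev.
Qed.
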